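(* Let $H\ge1$, $W_j\in\mathbb{R}^{d_j\times d_{j-1}}$ for $j\in[H+1]$ be fixed matrices $\hat W_j$, write $\hat W_{i:j}=\hat W_i\cdots\hat W_j$ for $i\ge j$ and $\hat W_{j-1:j}=I$, fix $j^*\in[H+1]$ and $\epsilon>0$. Suppose $A:=\hat W_{H+1:j^*+1}$ has full row rank and $B:=\hat W_{j^*-1:1}$ has full column rank. Then any $R\in\mathbb{R}^{d_{H+1}\times d_0}$ satisfying $\|R-\hat W_{H+1:1}\|_F\le\sigma_{\min}(A)\sigma_{\min}(B)\epsilon$ can be written as $R=V_{H+1}V_H\cdots V_1$, where $$V_{j^*}=\hat W_{j^*}+A^T(AA^T)^{-1}(R-\hat W_{H+1:1})(B^TB)^{-1}B^T$$ and $V_j=\hat W_j$ for $j\ne j^*$; moreover $\|V_j-\hat W_j\|_F\le\epsilon$ for all $j$.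
   Context: $\sigma_{\min}(M)$ denotes the smallest singular value of $M$ (equivalently, for $A$ of full row rank, its $\mathrm{rank}$-th singular value, which is positive; similarly for $B$ of full column rank). $\|\cdot\|_F$ is the Frobenius norm. *)

(* Defs.v *)
From HB Require Import structures.
From mathcomp Require Import all_boot all_order all_algebra.
From mathcomp Require Import all_classical all_reals.
Set Implicit Arguments. Unset Strict Implicit. Unset Printing Implicit Defensive.
Import Order.TTheory GRing.Theory Num.Theory.
Local Open Scope ring_scope.
Local Open Scope classical_set_scope.

Definition frob {R : realType} {m n : nat} (M : 'M[R]_(m, n)) : R :=
  Num.sqrt (\sum_(i < m) \sum_(j < n) M i j ^+ 2).

Definition lambda_min {R : realType} {n : nat} (S : 'M[R]_n) : R :=
  inf [set a : R | eigenvalue S a].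

(* Smallest singular value of M : m x n, i.e. the min(m,n)-th singular value:
   square root of the smallest eigenvalue of M M^T (if m <= n) or M^T M. *)
Definition sigma_min {R : realType} {m n : nat} (M : 'M[R]_(m, n)) : R :=
  if (m <= n)%N then Num.sqrt (lambda_min (M *m M^T))
  else Num.sqrt (lambda_min (M^T *m M)).

Section Products.
Variables (R : realType) (d : nat -> nat).
(* Layer matrices, indexed as in the paper: W j : d_j x d_{j-1} (j >= 1). *)
Variable W : forall j : nat, 'M[R]_(d j, d j.-1).

Fixpoint pre (j : nat) : 'M[R]_(d j, d 0) :=
  match j with
  | 0 => 1%:M
  | j'.+1 => W j'.+1 *m pre j'
  end.

(* seg j n = W_{j+n} ... W_{j+1}  =  W_{j+n : j+1}  (seg j 0 = I). *)
Fixpoint seg (j n : nat) : 'M[R]_(d (n + j), d j) :=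
  match n with
  | 0 => 1%:M
  | n'.+1 => W (n' + j).+1 *m seg j n'
  end.
End Products.

Lemma top_eq (d : nat -> nat) (H js : nat) (h : (js <= H.+1)%N) :
  d (H.+1 - js + js)%N = d H.+1.
Proof. by rewrite subnK. Qed.

(* W_{H+1 : js+1}, as a d_{H+1} x d_{js} matrix. *)
Definition topW {R : realType} (d : nat -> nat) (W : forall j, 'M[R]_(d j, d j.-1))
  (H js : nat) (h : (js <= H.+1)%N) : 'M[R]_(d H.+1, d js) :=
  castmx (@top_eq d H js h, erefl) (seg W js (H.+1 - js)).

(* Main.v *)
Require Import Defs.
From HB Require Import structures.
From mathcomp Require Import all_boot all_order all_algebra.
From mathcomp Require Import all_classical all_reals.
From mathcomp Require Import ring lra.
Import Order.TTheory GRing.Theory Num.Theory.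
Local Open Scope ring_scope.
Local Open Scope classical_set_scope.

Definition dot {R : realType} {n : nat} (x y : 'rV[R]_n) : R := (x *m y^T) 0 0.

Lemma dotE {R : realType} {n} (x y : 'rV[R]_n) : dot x y = \sum_i x 0 i * y 0 i.
Proof. by rewrite /dot mxE; apply: eq_bigr => i _; rewrite mxE. Qed.

Lemma dotC {R : realType} {n} (x y : 'rV[R]_n) : dot x y = dot y x.
Proof. by rewrite !dotE; apply: eq_bigr => i _; rewrite mulrC. Qed.

Lemma dotDl {R : realType} {n} (x y z : 'rV[R]_n) : dot (x + y) z = dot x z + dot y z.
Proof. by rewrite /dot mulmxDl mxE. Qed.

Lemma dotDr {R : realType} {n} (x y z : 'rV[R]_n) : dot z (x + y) = dot z x + dot z y.
Proof. by rewrite dotC dotDl !(dotC z). Qed.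

Lemma dotZl {R : realType} {n} a (x z : 'rV[R]_n) : dot (a *: x) z = a * dot x z.
Proof. by rewrite /dot -scalemxAl mxE. Qed.

Lemma dotZr {R : realType} {n} a (x z : 'rV[R]_n) : dot z (a *: x) = a * dot z x.
Proof. by rewrite dotC dotZl dotC. Qed.

Lemma dot0l {R : realType} {n} (z : 'rV[R]_n) : dot 0 z = 0.
Proof. by rewrite /dot mul0mx mxE. Qed.

Lemma dotMl {R : realType} {n} m (x : 'rV[R]_n) (y : 'rV[R]_m) (M : 'M[R]_(n, m)) :
  dot (x *m M) y = dot x (y *m M^T).
Proof. by rewrite /dot trmx_mul trmxK mulmxA. Qed.

Lemma dot_ge0 {R : realType} {n} (x : 'rV[R]_n) : 0 <= dot x x.
Proof. by rewrite dotE; apply: sumr_ge0 => i _; rewrite -expr2 sqr_ge0. Qed.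

Lemma dot_eq0 {R : realType} {n} (x : 'rV[R]_n) : (dot x x == 0) = (x == 0).
Proof.
apply/idP/idP => [|/eqP->]; last by rewrite dot0l.
rewrite dotE psumr_eq0 => [/allP H|i _]; last by rewrite -expr2 sqr_ge0.
apply/eqP/rowP => i; rewrite mxE; have := H i (mem_index_enum _).
by rewrite /= -expr2 sqrf_eq0 => /eqP.
Qed.

Lemma dot_gt0 {R : realType} {n} (x : 'rV[R]_n) : x != 0 -> 0 < dot x x.
Proof. by rewrite lt_def dot_eq0 dot_ge0 => ->. Qed.

Lemma CS {R : realType} {n} (M : 'M[R]_n) (x y : 'rV[R]_n) :
  M^T = M -> (forall z, 0 <= dot (z *m M) z) ->
  dot (x *m M) y ^+ 2 <= dot (x *m M) x * dot (y *m M) y.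
Proof.
move=> sM psd.
set a := dot (x *m M) x; set b := dot (x *m M) y; set c := dot (y *m M) y.
have yx : dot (y *m M) x = b by rewrite dotMl sM dotC.
have key t : 0 <= a + 2 * t * b + t ^+ 2 * c.
  have := psd (x + t *: y).
  rewrite mulmxDl -scalemxAl !dotDl !dotDr !dotZl !dotZr -/a -/b -/c yx.
  by congr (_ <= _); ring.
have c0 : 0 <= c by apply: psd.
have a0 : 0 <= a by apply: psd.
have [c00|cpos] := eqVneq c 0.
  rewrite c00 mulr0.
  have [b0|bn0] := eqVneq b 0; first by rewrite b0 expr0n.
  have := key (- (a + 1) / (2 * b)); rewrite c00 mulr0 addr0.
  have -> : 2 * (- (a + 1) / (2 * b)) * b = - (a + 1) by field; rewrite bn0.
  lra.
have cp : 0 < c by rewrite lt_def cpos c0.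
have := key (- b / c).
have -> : a + 2 * (- b / c) * b + (- b / c) ^+ 2 * c = a - b ^+ 2 / c.
  by field.
rewrite subr_ge0 ler_pdivrMr // => h; by rewrite mulrC.
Qed.

Lemma CS1 {R : realType} {n} (x y : 'rV[R]_n) : dot x y ^+ 2 <= dot x x * dot y y.
Proof.
have := @CS R n 1%:M x y (trmx1 _ _).
by rewrite !mulmx1; apply => z; rewrite mulmx1 dot_ge0.
Qed.

Lemma dotBl {R : realType} {n} (x y z : 'rV[R]_n) : dot (x - y) z = dot x z - dot y z.
Proof. by rewrite /dot mulmxBl !mxE. Qed.

Lemma opbound {R : realType} {n m} (N : 'M[R]_(n, m)) :
  exists K, 0 < K /\ forall x, dot (x *m N) (x *m N) <= K * dot x x.
Proof.
exists (1 + \sum_j dot (row j N^T) (row j N^T)); split.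
  by apply: (lt_le_trans ltr01); rewrite lerDl; apply: sumr_ge0 => j _; apply: dot_ge0.
move=> x.
have e j : (x *m N) 0 j = dot x (row j N^T).
  by rewrite dotE mxE; apply: eq_bigr => i _; rewrite !mxE.
rewrite dotE mulrDl mul1r mulr_suml addrC -[X in X <= _]addr0 lerD ?dot_ge0 //.
apply: ler_sum => j _; rewrite e -expr2 mulrC; exact: CS1.
Qed.

Lemma eigenvalueE {R : realType} {n} (S : 'M[R]_n) a :
  eigenvalue S a = ~~ row_free (S - a%:M).
Proof. by rewrite /eigenvalue /eigenspace -kermx_eq0. Qed.

Lemma lmin_spec {R : realType} {n} (S : 'M[R]_n) : (0 < n)%N -> S^T = S ->
  (forall z, 0 <= dot (z *m S) z) ->
  eigenvalue S (lambda_min S) /\ forall x, lambda_min S * dot x x <= dot (x *m S) x.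
Proof.
move=> n0 sS psd.
pose E := [set r : R | exists2 x : 'rV[R]_n, x != 0 & r = dot (x *m S) x / dot x x].
pose mu := inf E.
have En : E !=set0.
  pose c1 : 'rV[R]_n := const_mx 1.
  exists (dot (c1 *m S) c1 / dot c1 c1).
  exists c1 => //; apply/eqP => /rowP /(_ (Ordinal n0)).
  by rewrite !mxE => /eqP; rewrite oner_eq0.
have Elb : has_lbound E.
  exists 0 => r [x _ ->]; apply: divr_ge0; [exact: psd | exact: dot_ge0].
have hmu x : mu * dot x x <= dot (x *m S) x.
  have [->|xn0] := eqVneq x 0; first by rewrite dot0l mul0mx dot0l mulr0.
  rewrite -ler_pdivlMr ?dot_gt0 //; apply: (ge_inf Elb); by exists x.
pose M := S - mu%:M.
have qM z : dot (z *m M) z = dot (z *m S) z - mu * dot z z.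
  by rewrite mulmxBr mul_mx_scalar dotBl dotZl.
have sM : M^T = M by rewrite /M linearB /= sS tr_scalar_mx.
have psdM z : 0 <= dot (z *m M) z by rewrite qM subr_ge0.
have nrf : ~~ row_free M.
  apply/negP => rf; have uM : M \in unitmx by rewrite -row_free_unit.
  have [K [K0 hK]] := opbound (invmx M).
  have : mu + 1 / (1 + K) <= mu.
    apply: lb_le_inf => // _ [x xn0 ->].
    set y := x *m invmx M.
    have yM : y *m M = x by rewrite /y mulmxKV.
    set s := dot x x; set r := dot (x *m M) x; set p := dot (y *m M) y.
    have s0 : 0 < s by apply: dot_gt0.
    have r0 : 0 <= r by apply: psdM.
    have p0 : 0 <= p by apply: psdM.
    have h1 : s ^+ 2 <= p * r.
      by have := @CS R n M y x sM psdM; rewrite [in X in X ^+ 2]yM.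
    have h2 : p ^+ 2 <= K * s ^+ 2.
      have := CS1 x y; rewrite -/s; have -> : dot x y = p by rewrite /p yM.
      move=> h; apply: (le_trans h); rewrite expr2 mulrCA ler_wpM2l ?(ltW s0) //.
      exact: hK.
    have h3 : s ^+ 2 <= K * r ^+ 2.
      have h4 : s ^+ 2 * s ^+ 2 <= s ^+ 2 * (K * r ^+ 2).
        have -> : s ^+ 2 * (K * r ^+ 2) = K * s ^+ 2 * r ^+ 2 by ring.
        apply: (le_trans (y := (p * r) ^+ 2)).
          by rewrite [X in _ <= X]expr2; apply: ler_pM; rewrite ?sqr_ge0.
        by rewrite exprMn ler_wpM2r ?sqr_ge0.
      have s2 : 0 < s ^+ 2 by rewrite exprn_gt0.
      move: h4.
      by rewrite ler_pM2l.
    have h5 : s <= (1 + K) * r.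
      have [sr|rs] := leP s r; first nra.
      nra.
    have -> : dot (x *m S) x / s = r / s + mu.
      by rewrite /r qM -/s mulrBl mulfK ?lt0r_neq0 // subrK.
    have K1 : 0 < 1 + K by apply: ltr_pwDl => //; apply: ltW.
    by rewrite addrC lerD2r ler_pdivlMr // div1r ler_pdivrMl.
  have : 0 < 1 / (1 + K) by rewrite divr_gt0 // ltr_pwDl // ltW.
  lra.
have eigmu : eigenvalue S mu by rewrite eigenvalueE.
have -> : lambda_min S = mu.
  have lb : lbound [set a : R | eigenvalue S a] mu.
    move=> a /eigenvalueP [v vS vn0].
    have := hmu v; rewrite vS dotZl ler_pM2r //; exact: dot_gt0.
  apply/eqP; rewrite eq_le; apply/andP; split.
    by apply: (ge_inf (ex_intro _ mu lb)).
  by apply: lb_le_inf => //; exists mu.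
by split.
Qed.

Lemma dotAAT {R : realType} {p q} (C : 'M[R]_(p, q)) (z : 'rV[R]_p) :
  dot (z *m (C *m C^T)) z = dot (z *m C) (z *m C).
Proof. by rewrite mulmxA dotMl trmxK. Qed.

Lemma lmin_le_eig {R : realType} {p q} (C : 'M[R]_(p, q)) a :
  eigenvalue (C *m C^T) a -> lambda_min (C *m C^T) <= a.
Proof.
move=> ea; apply: (ge_inf _ ea); exists 0 => b /eigenvalueP [v vS vn0].
have := dot_ge0 (v *m C); rewrite -dotAAT vS dotZl pmulr_lge0 //; exact: dot_gt0.
Qed.

Lemma rowfree_facts {R : realType} {m n} (A : 'M[R]_(m, n)) :
  (0 < m)%N -> row_free A ->
  let S := A *m A^T in
  [/\ 0 < lambda_min S, S \in unitmx,
      forall x, dot (x *m invmx S *m A) (x *m invmx S *m A) <= (lambda_min S)^-1 * dot x x,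
      sigma_min A <= Num.sqrt (lambda_min S)
    & sigma_min A^T <= Num.sqrt (lambda_min S)].
Proof.
move=> m0 rf S.
have sS : S^T = S by rewrite /S trmx_mul trmxK.
have psd z : 0 <= dot (z *m S) z by rewrite dotAAT dot_ge0.
have [eig hl] := lmin_spec S m0 sS psd.
set l := lambda_min S in eig hl *.
have qpos v : v != 0 -> 0 < dot (v *m S) v.
  by move=> vn0; rewrite dotAAT dot_gt0 // mulmx_free_eq0.
have l0 : 0 < l.
  case/eigenvalueP: eig => v vS vn0.
  have := qpos v vn0; rewrite vS dotZl pmulr_lgt0 //; exact: dot_gt0.
have uS : S \in unitmx.
  rewrite -row_free_unit; apply/negPn/negP => nrf.
  have : eigenvalue S 0 by rewrite eigenvalueE raddf0 subr0.
  case/eigenvalueP => v vS vn0.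
  by have := qpos v vn0; rewrite vS scale0r dot0l ltxx.
split => //.
- move=> x; set y := x *m invmx S.
  have yS : y *m S = x by rewrite /y mulmxKV.
  set P := dot (y *m A) (y *m A).
  have eP : P = dot x y by rewrite /P -(dotAAT A y) yS.
  have P0 : 0 <= P by apply: dot_ge0.
  have h1 : P ^+ 2 <= dot x x * dot y y by rewrite eP; apply: CS1.
  have h2 : l * dot y y <= P.
    by have := hl y; rewrite /P -(dotAAT A y).
  have sx := dot_ge0 x; have sy := dot_ge0 y.
  rewrite ler_pdivlMl //.
  have [->|Pn0] := eqVneq P 0; first by rewrite mulr0.
  have Pp : 0 < P by rewrite lt_def Pn0.
  have : l * P * P <= dot x x * P.
    have h3 := ler_wpM2l (ltW l0) h1.
    have h4 := ler_wpM2l sx h2.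
    apply: (le_trans _ (le_trans _ h4)); [rewrite expr2 mulrA in h3 *; exact: h3 |].
    by rewrite mulrCA.
  by rewrite ler_pM2r.
- have le1 : lambda_min (A^T *m A) <= l.
  have -> : A^T *m A = A^T *m A^T^T by rewrite trmxK.
  apply: lmin_le_eig; apply/eigenvalueP.
  case/eigenvalueP: eig => v vS vn0.
  exists (v *m A); last by rewrite mulmx_free_eq0.
  by rewrite trmxK mulmxA -(mulmxA v) vS scalemxAl.
  rewrite /sigma_min; case: ifP => _ //; exact: ler_wsqrtr.
- have le1 : lambda_min (A^T *m A) <= l.
  have -> : A^T *m A = A^T *m A^T^T by rewrite trmxK.
  apply: lmin_le_eig; apply/eigenvalueP.
  case/eigenvalueP: eig => v vS vn0.
  exists (v *m A); last by rewrite mulmx_free_eq0.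
  by rewrite trmxK mulmxA -(mulmxA v) vS scalemxAl.
  rewrite /sigma_min trmxK; case: ifP => _ //; exact: ler_wsqrtr.
Qed.

Definition ss {R : realType} {m n : nat} (M : 'M[R]_(m, n)) : R :=
  \sum_(i < m) \sum_(j < n) M i j ^+ 2.

Lemma ss_ge0 {R : realType} {m n} (M : 'M[R]_(m, n)) : 0 <= ss M.
Proof. by apply: sumr_ge0 => i _; apply: sumr_ge0 => j _; apply: sqr_ge0. Qed.

Lemma ss_row {R : realType} {m n} (M : 'M[R]_(m, n)) :
  ss M = \sum_i dot (row i M) (row i M).
Proof.
apply: eq_bigr => i _; rewrite dotE; apply: eq_bigr => j _; by rewrite !mxE expr2.
Qed.

Lemma ss_tr {R : realType} {m n} (M : 'M[R]_(m, n)) : ss M^T = ss M.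
Proof. by rewrite /ss exchange_big; apply: eq_bigr => i _; apply: eq_bigr => j _; rewrite mxE. Qed.

Lemma ss_mul {R : realType} {p m n} (X : 'M[R]_(p, m)) (N : 'M[R]_(m, n)) c :
  (forall x, dot (x *m N) (x *m N) <= c * dot x x) -> ss (X *m N) <= c * ss X.
Proof.
move=> h; rewrite !ss_row mulr_sumr; apply: ler_sum => i _.
by rewrite row_mul; apply: h.
Qed.

Lemma rv0 {R : realType} {m} (x : 'rV[R]_m) : m = 0%N -> x = 0.
Proof. by move=> m0; subst m; apply/rowP => -[]. Qed.

Lemma pre_seg {R : realType} (d : nat -> nat) (W : forall j, 'M[R]_(d j, d j.-1)) j k :
  pre W (k + j) = seg W j k *m pre W j.
Proof.
elim: k => [|k IH] /=; first by rewrite mul1mx.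
by rewrite -mulmxA -IH.
Qed.

Lemma pre_cast {R : realType} (d : nat -> nat) (W : forall j, 'M[R]_(d j, d j.-1))
  N k j (e : (k + j)%N = N) (e' : d (k + j) = d N) :
  pre W N = castmx (e', erefl) (seg W j k) *m pre W j.
Proof. by subst N; rewrite (eq_irrelevance e' erefl) castmx_id pre_seg. Qed.

Lemma pre_top {R : realType} (d : nat -> nat) (W : forall j, 'M[R]_(d j, d j.-1))
  H js (h : (js <= H.+1)%N) : pre W H.+1 = topW W h *m pre W js.
Proof. exact: pre_cast (subnK h) (top_eq d h). Qed.

Lemma pre_S {R : realType} (d : nat -> nat) (W : forall j, 'M[R]_(d j, d j.-1)) j :
  (0 < j)%N -> pre W j = W j *m pre W j.-1.
Proof. by case: j. Qed.

Lemma seg_ext {R : realType} (d : nat -> nat) (V W : forall j, 'M[R]_(d j, d j.-1)) j :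
  (forall i, (j < i)%N -> V i = W i) -> forall k, seg V j k = seg W j k.
Proof.
move=> h; elim => [|k IH] //=; rewrite IH h //; by rewrite ltnS leq_addl.
Qed.

Lemma pre_ext {R : realType} (d : nat -> nat) (V W : forall j, 'M[R]_(d j, d j.-1)) js :
  (forall i, (i < js)%N -> V i = W i) -> forall j, (j < js)%N -> pre V j = pre W j.
Proof.
move=> h; elim => [|j IH] //= hj; rewrite IH ?h //; exact: ltnW.
Qed.

Lemma topW_ext {R : realType} (d : nat -> nat) (V W : forall j, 'M[R]_(d j, d j.-1))
  H js (h : (js <= H.+1)%N) :
  (forall i, (js < i)%N -> V i = W i) -> topW V h = topW W h.
Proof. by move=> e; rewrite /topW (@seg_ext R d V W js e). Qed.

Definition Vdef {R : realType} (d : nat -> nat) (W : forall j, 'M[R]_(d j, d j.-1))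
  {js} (Y : 'M[R]_(d js, d js.-1)) : forall j, 'M[R]_(d j, d j.-1) :=
  fun j => W j + match js =P j with
    | ReflectT e => eq_rect js (fun k => 'M[R]_(d k, d k.-1)) Y j e
    | ReflectF _ => 0 end.

Lemma Vdef_js {R : realType} (d : nat -> nat) (W : forall j, 'M[R]_(d j, d j.-1))
  js (Y : 'M[R]_(d js, d js.-1)) : Vdef d W Y js = W js + Y.
Proof. by rewrite /Vdef; case: eqP => [e|//]; rewrite (eq_irrelevance e erefl). Qed.

Lemma Vdef_ne {R : realType} (d : nat -> nat) (W : forall j, 'M[R]_(d j, d j.-1))
  js (Y : 'M[R]_(d js, d js.-1)) j : j <> js -> Vdef d W Y j = W j.
Proof. by rewrite /Vdef; case: eqP => [e|_ _]; [move=> /(_ (esym e)) | rewrite addr0]. Qed.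

Lemma sigma_ge0 {R : realType} {m n} (A : 'M[R]_(m, n)) : 0 <= sigma_min A.
Proof. by rewrite /sigma_min; case: ifP => _; apply: sqrtr_ge0. Qed.

Lemma AAT_unit {R : realType} {m n} (A : 'M[R]_(m, n)) :
  row_free A -> A *m A^T \in unitmx.
Proof.
case: m A => [|m] A rf.
  by rewrite -row_free_unit /row_free -leqn0 rank_leq_row.
by case: (rowfree_facts A (isT : (0 < m.+1)%N) rf).
Qed.

Lemma LA {R : realType} {m n} (A : 'M[R]_(m, n)) : row_free A ->
  exists c, [/\ 0 <= c, (m = 0%N -> c = 0),
    forall x, dot (x *m (invmx (A *m A^T) *m A)) (x *m (invmx (A *m A^T) *m A)) <= c * dot x x,
    ((0 < m)%N -> c * sigma_min A ^+ 2 <= 1)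
  & ((0 < m)%N -> c * sigma_min A^T ^+ 2 <= 1)].
Proof.
move=> rf; have [m0|mpos] := posnP m.
  exists 0; split => //.
  - by move=> x; rewrite (rv0 x m0) mul0mx !dot0l mulr0.
have [l0 uS hb s1 s2] := rowfree_facts A mpos rf.
set l := lambda_min _ in l0 hb s1 s2.
have key s : 0 <= s -> s <= Num.sqrt l -> l^-1 * s ^+ 2 <= 1.
  move=> s0 sl; rewrite ler_pdivrMl // mulr1.
  rewrite -(sqr_sqrtr (ltW l0)); rewrite [X in _ <= X]expr2 expr2.
  by apply: ler_pM.
exists l^-1; split => //.
- by rewrite invr_ge0 ltW.
- by move=> m00; move: mpos; rewrite m00.
- by move=> x; rewrite mulmxA; apply: hb.
- by move=> _; apply: key => //; apply: sigma_ge0.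
- by move=> _; apply: key => //; apply: sigma_ge0.
Qed.
Close Scope classical_set_scope.

Theorem lemmaA6 (R : realType) (H : nat) (d : nat -> nat)
  (W : forall j : nat, 'M[R]_(d j, d j.-1))
  (js : nat) (hjs1 : (1 <= js)%N) (hjs2 : (js <= H.+1)%N) (eps : R)
  (hH : (1 <= H)%N) (heps : 0 < eps)
  (hA : \rank (topW W hjs2) = d H.+1)
  (hB : \rank (pre W js.-1) = d 0)
  (Rm : 'M[R]_(d H.+1, d 0))
  (hR : frob (Rm - pre W H.+1)
        <= sigma_min (topW W hjs2) * sigma_min (pre W js.-1) * eps) :
  let A := topW W hjs2 in
  let B := pre W js.-1 in
  exists V : forall j : nat, 'M[R]_(d j, d j.-1),
    [/\ V js = W js + A^T *m invmx (A *m A^T) *m (Rm - pre W H.+1)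
                       *m invmx (B^T *m B) *m B^T,
        (forall j, j <> js -> V j = W j),
        Rm = pre V H.+1
      & forall j, (1 <= j <= H.+1)%N -> frob (V j - W j) <= eps].
Proof.
move=> A B.
set D := Rm - pre W H.+1 in hR *.
set Y := A^T *m invmx (A *m A^T) *m D *m invmx (B^T *m B) *m B^T.
have rfA : row_free A by rewrite /row_free hA.
have rfB : row_free B^T by rewrite /row_free mxrank_tr hB.
have uA := AAT_unit A rfA.
have uB := AAT_unit B^T rfB; rewrite trmxK in uB.
exists (Vdef d W Y); split.
- exact: Vdef_js.
- by move=> j; apply: Vdef_ne.
- rewrite (@pre_top R d _ H js hjs2) (@topW_ext R d _ W H js hjs2); last first.
    by move=> i hi; apply: Vdef_ne => e; rewrite e ltnn in hi.
  rewrite (@pre_S R d _ js hjs1) Vdef_js (@pre_ext R d _ W js _ js.-1); last 2 first.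
  + by move=> i hi; apply: Vdef_ne => e; subst i; rewrite ltnn in hi.
  + by rewrite prednK.
  rewrite -/A -/B mulmxDl mulmxDr.
  have -> : A *m (W js *m B) = pre W H.+1 by rewrite (@pre_top R d W H js hjs2) (@pre_S R d _ js hjs1).
  have -> : A *m (Y *m B) = D.
    by rewrite /Y !mulmxA mulmxV // mul1mx -!mulmxA mulVmx // mulmx1.
  by rewrite /D addrC subrK.
- move=> j /andP [j1 j2].
  have [ej|nej] := eqVneq j js; last first.
    rewrite Vdef_ne; last exact/eqP.
    rewrite subrr /frob big1 ?sqrtr0 ?ltW // => i _.
    by rewrite big1 // => k _; rewrite mxE expr0n.
  subst j; rewrite Vdef_js addrAC subrr add0r.
  have [cA [cA0 cAz hA' sA _]] := LA A rfA.
  have [cB [cB0 cBz hB' _ sB]] := LA B^T rfB.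
  rewrite trmxK in hB' sB.
  have ssY : ss Y <= cA * (cB * ss D).
    have eY : Y = (A^T *m invmx (A *m A^T)) *m (D *m (invmx (B^T *m B) *m B^T)).
      by rewrite /Y !mulmxA.
    rewrite -ss_tr eY trmx_mul.
    have -> : (A^T *m invmx (A *m A^T))^T = invmx (A *m A^T) *m A.
      by rewrite trmx_mul trmx_inv trmx_mul trmxK.
    apply: (le_trans (ss_mul _ _ _ hA')); apply: ler_wpM2l => //.
    by rewrite ss_tr; apply: ss_mul.
  have ssY2 : ss Y <= eps ^+ 2.
    have [m0|mp] := posnP (d H.+1).
      by rewrite (cAz m0) mul0r in ssY; apply: (le_trans ssY); apply: sqr_ge0.
    have [n0|np] := posnP (d 0).
      by rewrite (cBz n0) mul0r mulr0 in ssY; apply: (le_trans ssY); apply: sqr_ge0.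
    have hA2 := sA mp; have hB2 := sB np.
    set a := sigma_min A in hA2; set b := sigma_min B in hB2.
    have a0 : 0 <= a by apply: sigma_ge0.
    have b0 : 0 <= b by apply: sigma_ge0.
    have h1 : ss D <= (a * b * eps) ^+ 2.
      rewrite -(sqr_sqrtr (ss_ge0 D)) [X in _ <= X]expr2 expr2.
      have f0 : 0 <= Num.sqrt (ss D) by apply: sqrtr_ge0.
      by apply: ler_pM.
    apply: (le_trans ssY).
    apply: (le_trans (y := cA * (cB * (a * b * eps) ^+ 2))).
      by apply: ler_wpM2l => //; apply: ler_wpM2l.
    have -> : cA * (cB * (a * b * eps) ^+ 2) = (cA * a ^+ 2) * (cB * b ^+ 2) * eps ^+ 2.
      by ring.
    rewrite -[X in _ <= X]mul1r; apply: ler_wpM2r; first exact: sqr_ge0.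
    rewrite -[X in _ <= X]mul1r; apply: ler_pM => //; apply: mulr_ge0 => //; exact: sqr_ge0.
  apply: (le_trans (ler_wsqrtr ssY2)).
  by rewrite sqrtr_sqr ger0_norm // ltW.
Qed.
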